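(* Let $\Sigma=(\sigma_1,\dots,\sigma_k)$ be a mixed substitution system on a finite set of prototiles $\mathcal{F}$ in $\mathbb{R}^d$. Then $\mathbb{X}_{\Sigma,\Omega}\subset\mathbb{Y}_{\Sigma,\Omega}$.
   Context: Tiles are compact sets equal to the closure of their interior; patches are tessellations of bounded sets by tiles with pairwise disjoint interiors, tilings are tessellations of $\mathbb{R}^d$. $\mathcal{F}=\{T_1,\dots,T_n\}$ is a finite set of prototiles and $\mathcal{F}^*$ the set of patches of translates of prototiles up to translation. A substitution rule with inflation factor $\xi>1$ is a map $\sigma:\mathcal{F}\to\mathcal{F}^*$ with $\operatorname{supp}\sigma(T_i)=\xi T_i$, extended to patches tile by tile ($T_i+t\mapsto\sigma(T_i)+\xi t$); it is primitive if some power of its substitution matrix (entries $a_{ij}=$ number of tiles that are translates of $T_i$ in $\sigma(T_j)$) is strictly positive. A mixed substitution system is a tuple $\Sigma=(\sigma_1,\dots,\sigma_k)$ of primitive substitution rules on $\mathcal{F}$. Let $\mathcal{A}=\{1,\dots,k\}$, $\Omega=\mathcal{A}^{\mathbb{N}}$, and $w(m)=(w_1,\dots,w_m)$. For a finite word $a=(a_1,\dots,a_m)$ define $a.P=\sigma_{a_1}(\sigma_{a_2}(\cdots\sigma_{a_m}(P)\cdots))$ (left action) and $P.a=\sigma_{a_m}(\sigma_{a_{m-1}}(\cdots\sigma_{a_1}(P)\cdots))$ (right action). For $w\in\Omega$ let $\mathcal{P}_w=\{w(m).T:T\in\mathcal{F},m\in\mathbb{N}\}$ and $\mathcal{R}_w=\{T.w(m):T\in\mathcal{F},m\in\mathbb{N}\}$.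 $\mathbb{X}_{\Sigma,w}$ (resp. $\mathbb{Y}_{\Sigma,w}$) is the set of tilings of $\mathbb{R}^d$ every finite patch of which is a translate of a sub-patch of some element of $\mathcal{P}_w$ (resp. $\mathcal{R}_w$), and $\mathbb{X}_{\Sigma,\Omega}=\bigcup_{w\in\Omega}\mathbb{X}_{\Sigma,w}$, $\mathbb{Y}_{\Sigma,\Omega}=\bigcup_{w\in\Omega}\mathbb{Y}_{\Sigma,w}$. *)

(* Defs.v *)
From HB Require Import structures.
From mathcomp Require Import all_boot all_order all_algebra.
From mathcomp Require Import all_classical all_reals all_analysis.
Set Implicit Arguments. Unset Strict Implicit. Unset Printing Implicit Defensive.
Import Order.TTheory GRing.Theory Num.Theory numFieldNormedType.Exports.
Local Open Scope classical_set_scope.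
Local Open Scope ring_scope.

Section Tilings.
Context {R : realType} {d : nat}.
Notation V := 'rV[R]_d.

Definition is_tile (A : set V) : Prop := compact A /\ A = closure (interior A).

Definition translate (A : set V) (t : V) : set V := [set x + t | x in A].
Definition dilate (xi : R) (A : set V) : set V := [set xi *: x | x in A].

Context {n : nat}.
(* The prototiles T_1,...,T_n are given as T : 'I_n -> set V.
   A patch of translates of prototiles is given by a list of labelled
   translates (i, t), standing for the tile T_i + t. *)
Definition lpatch := seq ('I_n * V).

Definition tile_of (T : 'I_n -> set V) (p : 'I_n * V) : set V := translate (T p.1) p.2.

Definition support (T : 'I_n -> set V) (P : lpatch) : set V :=
  [set x | exists2 p, p \in P & tile_of T p x].

Definition tiles_of (T : 'I_n -> set V) (P : lpatch) : set (set V) :=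
  [set tile_of T p | p in [set p | p \in P]].

Definition is_patch (T : 'I_n -> set V) (P : lpatch) : Prop :=
  uniq P /\
  forall p q, p \in P -> q \in P -> p != q ->
    interior (tile_of T p) `&` interior (tile_of T q) = set0.

(* F = {T_1,...,T_n}: a finite set of (pairwise distinct) tiles *)
Definition is_prototile_set (T : 'I_n -> set V) : Prop :=
  (forall i, is_tile (T i)) /\ injective T.

Definition is_subst_rule (T : 'I_n -> set V) (xi : R) (sigma : 'I_n -> lpatch) : Prop :=
  1 < xi /\
  forall i, is_patch T (sigma i) /\ support T (sigma i) = dilate xi (T i).

Definition subst_patch (sigma : 'I_n -> lpatch) (xi : R) (P : lpatch) : lpatch :=
  flatten [seq [seq (q.1, q.2 + xi *: p.2) | q <- sigma p.1] | p <- P].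

Definition subst_mx (sigma : 'I_n -> lpatch) : 'M[int]_n :=
  \matrix_(i, j) (count (fun q : 'I_n * V => q.1 == i) (sigma j))%:Z.

Definition primitive (sigma : 'I_n -> lpatch) : Prop :=
  exists p : nat, forall i j, 0 < (subst_mx sigma ^+ p.+1) i j.

Context {k : nat}.

Definition is_mixed_system (T : 'I_n -> set V) (xi : 'I_k -> R)
    (sig : 'I_k -> 'I_n -> lpatch) : Prop :=
  forall a, is_subst_rule T (xi a) (sig a) /\ primitive (sig a).

(* a.P = sigma_{a_1}(... sigma_{a_m}(P)) *)
Definition left_act (xi : 'I_k -> R) (sig : 'I_k -> 'I_n -> lpatch)
    (a : seq 'I_k) (P : lpatch) : lpatch :=
  foldr (fun b Q => subst_patch (sig b) (xi b) Q) P a.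

(* P.a = sigma_{a_m}(... sigma_{a_1}(P)) *)
Definition right_act (xi : 'I_k -> R) (sig : 'I_k -> 'I_n -> lpatch)
    (P : lpatch) (a : seq 'I_k) : lpatch :=
  foldl (fun Q b => subst_patch (sig b) (xi b) Q) P a.

(* Omega = A^N, w(m) = (w_1,...,w_m) *)
Definition word_prefix (w : nat -> 'I_k) (m : nat) : seq 'I_k := mkseq w m.

Definition proto (i : 'I_n) : lpatch := [:: (i, 0)].

Definition Pw (xi : 'I_k -> R) (sig : 'I_k -> 'I_n -> lpatch) (w : nat -> 'I_k)
  : set lpatch :=
  [set Q | exists (i : 'I_n) (m : nat), Q = left_act xi sig (word_prefix w m) (proto i)].

Definition Rw (xi : 'I_k -> R) (sig : 'I_k -> 'I_n -> lpatch) (w : nat -> 'I_k)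
  : set lpatch :=
  [set Q | exists (i : 'I_n) (m : nat), Q = right_act xi sig (proto i) (word_prefix w m)].

Definition is_tiling (x : set (set V)) : Prop :=
  (forall S, x S -> is_tile S) /\
  (forall z : V, exists2 S, x S & S z) /\
  (forall S S', x S -> x S' -> S <> S' -> interior S `&` interior S' = set0).

Definition legal_in (T : 'I_n -> set V) (L : set lpatch) (P : set (set V)) : Prop :=
  exists2 Q, L Q &
    exists t : V, [set translate S t | S in P] `<=` tiles_of T Q.

Definition hull (T : 'I_n -> set V) (L : set lpatch) : set (set (set V)) :=
  [set x | is_tiling x /\
     forall P : set (set V), finite_set P -> P `<=` x -> legal_in T L P].

Definition XX (T : 'I_n -> set V) (xi : 'I_k -> R) (sig : 'I_k -> 'I_n -> lpatch)
    (w : nat -> 'I_k) := hull T (Pw xi sig w).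
Definition YY (T : 'I_n -> set V) (xi : 'I_k -> R) (sig : 'I_k -> 'I_n -> lpatch)
    (w : nat -> 'I_k) := hull T (Rw xi sig w).

Definition XOmega T xi sig : set (set (set V)) := [set x | exists w, XX T xi sig w x].
Definition YOmega T xi sig : set (set (set V)) := [set x | exists w, YY T xi sig w x].

End Tilings.

(* Main.v *)
Require Import Defs.
From mathcomp Require Import all_boot all_order all_algebra.
From mathcomp Require Import all_classical all_reals all_analysis.
From mathcomp Require Import zify.
Local Open Scope classical_set_scope.

Section Helpers.
Import Order.TTheory GRing.Theory Num.Theory.
Open Scope ring_scope.
Variables (R : realType) (d n k : nat).
Notation V := 'rV[R]_d.
Variables (T : 'I_n -> set V) (xi : 'I_k -> R) (sig : 'I_k -> 'I_n -> seq ('I_n * V)).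

Lemma translate_comp (S : set V) t s : translate (translate S t) s = translate S (t + s).
Proof.
apply/seteqP; split => x /=.
- by case=> y [z Sz <-] <-; exists z => //; rewrite addrA.
- by case=> z Sz <-; exists (z + t); [exists z|]; rewrite ?addrA.
Qed.

Lemma tile_shift (q : 'I_n * V) s :
  tile_of T (q.1, q.2 + s) = translate (tile_of T q) s.
Proof. by rewrite /tile_of translate_comp. Qed.

Lemma mem_subst (sg : 'I_n -> seq ('I_n * V)) x (P : seq ('I_n * V)) p r :
  p \in P -> r \in sg p.1 -> (r.1, r.2 + x *: p.2) \in subst_patch sg x P.
Proof.
move=> pP rs; apply/flattenP.
exists [seq (q.1, q.2 + x *: p.2) | q <- sg p.1]; first by apply: (map_f _ pP).
by apply: (map_f (fun q : 'I_n * V => (q.1, q.2 + x *: p.2)) rs).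
Qed.

Lemma subst_inv (sg : 'I_n -> seq ('I_n * V)) x (P : seq ('I_n * V)) q :
  q \in subst_patch sg x P -> exists2 p, p \in P & exists2 r, r \in sg p.1 &
    q = (r.1, r.2 + x *: p.2).
Proof.
case/flattenP=> l /mapP [p pP ->] /mapP [r rs ->].
by exists p => //; exists r.
Qed.

Lemma final S t s' (q : 'I_n * V) : tile_of T q = translate S t ->
  tile_of T (q.1, q.2 + s') = translate S (t + s').
Proof. by move=> qe; rewrite tile_shift qe translate_comp. Qed.

Hypothesis prim : forall a, primitive (sig a).

Lemma row_nz a i : exists j, exists r, (i, r) \in sig a j.
Proof.
have [p Hp] := prim a.
have := Hp i i; rewrite GRing.exprS -mulmxE mxE.
apply: contraPP => H.
rewrite big1 ?ltxx // => l _.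
rewrite mxE.
have -> : count (fun q : 'I_n * V => q.1 == i) (sig a l) = 0%N.
  apply/eqP; rewrite -leqn0 leqNgt -has_count; apply/negP => /hasP [q qs /eqP qi].
  apply: H; exists l, q.2; by rewrite -qi -surjective_pairing.
by rewrite mul0r.
Qed.

Lemma lemA b i' : exists j, exists s, (i', s) \in left_act xi sig b (proto j).
Proof.
elim: b i' => [|c b IH] i'.
  by exists i', 0; rewrite /= /proto mem_seq1.
have [j [r Hr]] := row_nz c i'.
have [j0 [s Hs]] := IH j.
exists j0, (r + xi c *: s) => /=.
by have := @mem_subst (sig c) (xi c) _ _ _ Hs Hr.
Qed.

Lemma lemB a (P : seq ('I_n * V)) i s : (i, s) \in P ->
  exists s', forall q, q \in left_act xi sig a (proto i) ->
    (q.1, q.2 + s') \in left_act xi sig a P.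
Proof.
move=> iP; elim: a => [|c a [s' IH]].
  by exists s => q; rewrite /= /proto mem_seq1 => /eqP -> /=; rewrite add0r.
exists (xi c *: s') => q /= /subst_inv [p pin [r rin ->]] /=.
have := @mem_subst (sig c) (xi c) _ _ _ (IH p pin) rin.
by rewrite /= scalerDr addrA.
Qed.

Lemma right_left (P : seq ('I_n * V)) u :
  right_act xi sig P u = left_act xi sig (rev u) P.
Proof. by rewrite /right_act /left_act -{1}(revK u) foldl_rev. Qed.

Lemma right_cat (P : seq ('I_n * V)) u a :
  right_act xi sig P (u ++ rev a) = left_act xi sig a (right_act xi sig P u).
Proof. by rewrite !right_left rev_cat revK /left_act foldr_cat. Qed.

Variable w : nat -> 'I_k.
Definition LL N := flatten [seq rev (mkseq w m) | m <- iota 0 N].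
Lemma LL_S N : LL N.+1 = LL N ++ rev (mkseq w N).
Proof. by rewrite /LL -addn1 iotaD map_cat flatten_cat /= cats0. Qed.

Lemma LL_prefix N1 N2 : (N1 <= N2)%N -> exists r, LL N2 = LL N1 ++ r.
Proof.
move/subnKC <-; elim: (N2 - N1)%N => [|e [r IH]]; first by exists [::]; rewrite addn0 cats0.
by exists (r ++ rev (mkseq w (N1 + e))); rewrite addnS LL_S IH catA.
Qed.

Lemma size_LL N : (N.-1 <= size (LL N))%N.
Proof.
elim: N => // N IH; rewrite LL_S size_cat size_rev size_mkseq /=.
case: N IH => // N /= IH; lia.
Qed.

Definition w' p := nth (w 0%N) (LL p.+2) p.

Lemma nth_LL N p : (p < size (LL N))%N -> nth (w 0%N) (LL N) p = w' p.
Proof.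
move=> hp; rewrite /w'.
have hp2 : (p < size (LL p.+2))%N by have := size_LL p.+2; simpl; lia.
case: (leqP N p.+2) => hN.
  by have [r ->] := LL_prefix _ _ hN; rewrite nth_cat hp.
have [r ->] := LL_prefix _ _ (ltnW hN); by rewrite nth_cat hp2.
Qed.

Lemma w'_prefix N : word_prefix w' (size (LL N)) = LL N.
Proof.
apply: (@eq_from_nth _ (w 0%N)); rewrite /word_prefix size_mkseq // => p hp.
by rewrite nth_mkseq // nth_LL.
Qed.

End Helpers.
Arguments translate_comp {R d}.
Arguments tile_shift {R d n}.
Arguments final {R d n}.
Arguments lemA {R d n k}.
Arguments lemB {R d n k}.
Arguments right_left {R d n k}.
Arguments right_cat {R d n k}.
Arguments LL {k}.
Arguments LL_S {k}.
Arguments w' {k}.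
Arguments w'_prefix {k}.

Theorem lemma6p2 (R : realType) (d n k : nat) (T : 'I_n -> set 'rV[R]_d)
    (xi : 'I_k -> R) (sig : 'I_k -> 'I_n -> seq ('I_n * 'rV[R]_d)) :
  is_prototile_set T -> is_mixed_system T xi sig ->
  XOmega T xi sig `<=` YOmega T xi sig.
Proof.
move=> _ Hm x [w [Htil Hleg]].
have prim : forall a, primitive (sig a) by move=> a; case: (Hm a).
exists (w' w); split => // P fP Px.
have [Q [i [m ->]] [t Ht]] := Hleg P fP Px.
have [j [s Hs]] := lemA xi sig prim (rev (LL w m)) i.
rewrite -right_left in Hs.
have [s' Hs'] := lemB xi sig (word_prefix w m) _ _ _ Hs.
exists (right_act xi sig (proto j) (word_prefix (w' w) (size (LL w m.+1)))).
  by exists j, (size (LL w m.+1)).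
exists (t + s')%R => _ [S PS <-].
rewrite w'_prefix LL_S right_cat.
have [q qin qe] := Ht _ (ex_intro2 _ _ S PS erefl).
exists (q.1, (q.2 + s')%R); first exact: Hs'.
exact: final.
Qed.
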